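(* Let $G$ be a finite simple connected graph with at least two vertices and diameter $D$. The following are equivalent: (1) $G$ is distance degree regular. (2) For every function $g:\{1,\dots,D\}\to\mathbb{R}$ and every $A\subseteq V(G)$ with $|A|>0$, $$E_g(A)-E_g(V(G)\setminus A)=\left(\frac{2|A|}{|V(G)|}-1\right)E_g(V(G)).$$ (3) For every function $g:\{1,\dots,D\}\to\mathbb{R}$, the complement of every minimizer of $E_g$ is a minimizer of $E_g$. (4) There exists a function $g:\{1,\dots,D\}\to\mathbb{R}$ such that $\{g(1),\dots,g(D)\}$ is linearly independent over $\mathbb{Q}$ and the complement of every minimizer of $E_g$ is a minimizer of $E_g$. Moreover, the equivalence remains true if in both (3) and (4) the word ''minimizer'' is replaced throughout by ''local minimizer'', or throughout by ''maximizer'', or throughout by ''local maximizer''.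
   Context: $d(u,v)$ is shortest-path distance in $G$. For $g:\{1,\dots,D\}\to\mathbb{R}$ and $A\subseteq V(G)$, $E_g(A)=\sum_{\{u,v\}\subseteq A,u\ne v}g(d(u,v))$ over unordered pairs ($E_g(A)=0$ if $|A|\le1$). For $F$ a real function on subsets of $V(G)$: $A$ is a minimizer (maximizer) of $F$ if $F(A)$ is the minimum (maximum) of $F(B)$ over all $B\subseteq V(G)$ with $|B|=|A|$. A perturbation of $A$ is a set $(A\setminus\{u\})\cup\{v\}$ with $u\in A$, $v\notin A$ and $uv$ an edge; $A$ is a local minimizer (maximizer) of $F$ if $F(A)$ equals the minimum (maximum) of $F(B)$ over all perturbations $B$ of $A$. The distance vector $\vec D(u)$ of a vertex $u$ is the non-decreasingly sorted tuple of distances from $u$ to all other vertices; $G$ is distance degree regular if $\vec D(u)=\vec D(v)$ for all vertices $u,v$ (equivalently, for each $i$, all vertices have the same number of vertices at distance $i$). *)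

(* Defs.v *)
From HB Require Import structures.
From mathcomp Require Import all_boot all_order all_algebra.
From mathcomp Require Import reals.
Set Implicit Arguments. Unset Strict Implicit. Unset Printing Implicit Defensive.
Import Order.TTheory GRing.Theory Num.Theory.

Section Graph.
Variables (T : finType) (e : rel T).

Definition simple_graph := symmetric e /\ irreflexive e.
Definition connected_graph := forall u v : T, connect e u v.

Fixpoint nwalk (n : nat) (u v : T) : bool :=
  if n is n'.+1 then [exists w, e u w && nwalk n' w v] else u == v.

(* shortest-path distance: least n with an n-edge walk (for connected
   graphs this is < #|T|; the value #|T| is only a junk value). *)
Definition dist (u v : T) : nat := find (fun n => nwalk n u v) (iota 0 #|T|).

Definition diameter : nat := \max_(u : T) \max_(v : T) dist u v.

Definition dist_vector (u : T) : seq nat := sort leq [seq dist u w | w in [set~ u]].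

Definition distance_degree_regular := forall u v : T, dist_vector u = dist_vector v.

Variable R : realType.

(* E_g(A): sum over unordered pairs {u,v} of distinct vertices of A
   (each unordered pair counted once, via the enumeration order of T) *)
Definition Eg (g : nat -> R) (A : {set T}) : R :=
  \sum_(u in A) \sum_(v in A | (enum_rank u < enum_rank v)%N) g (dist u v).

Definition is_minimizer (F : {set T} -> R) (A : {set T}) :=
  forall B : {set T}, #|B| = #|A| -> (F A <= F B)%R.
Definition is_maximizer (F : {set T} -> R) (A : {set T}) :=
  forall B : {set T}, #|B| = #|A| -> (F B <= F A)%R.

Definition is_perturbation (A B : {set T}) :=
  exists u v, [/\ u \in A, v \notin A, e u v & B = (A :\ u) :|: [set v]].

Definition is_local_minimizer (F : {set T} -> R) (A : {set T}) :=
  forall B, is_perturbation A B -> (F A <= F B)%R.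
Definition is_local_maximizer (F : {set T} -> R) (A : {set T}) :=
  forall B, is_perturbation A B -> (F B <= F A)%R.

Inductive opt_kind := Minimizer | LocalMinimizer | Maximizer | LocalMaximizer.

Definition is_opt (k : opt_kind) : ({set T} -> R) -> {set T} -> Prop :=
  match k with
  | Minimizer => is_minimizer
  | LocalMinimizer => is_local_minimizer
  | Maximizer => is_maximizer
  | LocalMaximizer => is_local_maximizer
  end.

Definition compl_closed (k : opt_kind) (g : nat -> R) :=
  forall A : {set T}, is_opt k (Eg g) A -> is_opt k (Eg g) (~: A).

Definition Q_lin_indep (g : nat -> R) (D : nat) :=
  forall q : nat -> rat,
    (\sum_(1 <= i < D.+1) ratr (q i) * g i)%R = 0%R ->
    forall i, (1 <= i <= D)%N -> q i = 0%R.

End Graph.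

(* Main.v *)
Require Import Defs.
From HB Require Import structures.
From mathcomp Require Import all_boot all_order all_algebra.
From mathcomp Require Import reals exp.
From mathcomp Require Import ring lra zify.
Set Implicit Arguments. Unset Strict Implicit. Unset Printing Implicit Defensive.
Import Order.TTheory GRing.Theory Num.Theory.
Local Open Scope ring_scope.

Section G.
Variables (T : finType) (e : rel T).
Hypothesis esym : symmetric e.

Lemma nwalkS n u v : nwalk e n.+1 u v = [exists w, e u w && nwalk e n w v].
Proof. by []. Qed.

Lemma nwalkSr n u v : nwalk e n.+1 u v = [exists w, nwalk e n u w && e w v].
Proof.
elim: n u => [|n IH] u.
  rewrite /=; by apply/existsP/existsP => [[w /andP[euw /eqP <-]]|[w /andP[/eqP -> ewv]]];
    [exists u | exists v]; rewrite ?eqxx ?andbT.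
rewrite nwalkS.
apply/existsP/existsP.
  move=> [w /andP[euw]]; rewrite IH => /existsP[w' /andP[h1 h2]].
  exists w'; rewrite h2 andbT nwalkS; apply/existsP; exists w; by rewrite euw.
move=> [w' /andP[]]; rewrite nwalkS => /existsP[w /andP[euw h]] ew'v.
exists w; rewrite IH euw /=; apply/existsP; exists w'; by rewrite h.
Qed.

Lemma nwalk_sym n u v : nwalk e n u v = nwalk e n v u.
Proof.
elim: n u v => [|n IH] u v; first by rewrite /= eq_sym.
rewrite nwalkS nwalkSr; apply/existsP/existsP => [[w /andP[h1 h2]]|[w /andP[h1 h2]]];
  exists w; [by rewrite esym IH h1 h2 | by rewrite esym IH h1 h2].
Qed.

Lemma dist_sym u v : dist e u v = dist e v u.
Proof. rewrite /dist; apply: eq_find => n; exact: nwalk_sym. Qed.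

Lemma dist_gt0 u v : u != v -> (0 < dist e u v)%N.
Proof.
move=> neq; rewrite /dist.
have : (0 < #|T|)%N by apply/card_gt0P; exists u.
case: #|T| => // m _ /=; by rewrite (negbTE neq).
Qed.

Lemma dist_leD u v : (dist e u v <= diameter e)%N.
Proof.
rewrite /diameter; apply: (leq_trans (@leq_bigmax _ (fun w => dist e u w) v)).
exact: (@leq_bigmax _ (fun u => (\max_w dist e u w)%N) u).
Qed.

Variable R : realType.
Variable g : nat -> R.
Let h u v := g (dist e u v).

Definition sg u := \sum_(w | w != u) h u w.
Definition Pg (A : {set T}) := \sum_(u in A) \sum_(v in A | v != u) h u v.
Definition Cg (A B : {set T}) := \sum_(u in A) \sum_(v in B) h u v.

Lemma Cg_sym (A B : {set T}) : Cg A B = Cg B A.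
Proof.
rewrite /Cg exchange_big /=; apply: eq_bigr => u _; apply: eq_bigr => v _.
by rewrite /h dist_sym.
Qed.

Lemma L1 (A : {set T}) : \sum_(u in A) sg u = Pg A + Cg A (~: A).
Proof.
rewrite /Pg /Cg -big_split /=; apply: eq_bigr => u uA.
rewrite /sg (bigID (fun w => w \in A)) /=; congr (_ + _).
  by apply: eq_bigl => w; rewrite andbC.
apply: eq_bigl => w; rewrite in_setC; apply/andP/idP => [[]//|wA]; split => //.
by apply: contraNneq wA => ->.
Qed.

Lemma Pg_Eg (A : {set T}) : Pg A = Eg e g A *+ 2.
Proof.
rewrite /Pg /Eg mulr2n.
have -> : \sum_(u in A) \sum_(v in A | v != u) h u v =
   \sum_(u in A) \sum_(v in A | (enum_rank u < enum_rank v)%N) h u v +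
   \sum_(u in A) \sum_(v in A | (enum_rank v < enum_rank u)%N) h u v.
  rewrite -big_split /=; apply: eq_bigr => u _.
  rewrite (bigID (fun v => (enum_rank u < enum_rank v)%N)) /=; congr (_ + _);
    apply: eq_bigl => v; rewrite -!andbA; congr (_ && _);
    (have neq : (v != u) = (enum_rank v != enum_rank u) by
      apply/idP/idP; apply: contra => /eqP; [move/enum_rank_inj -> | move=> ->]);
    rewrite neq -(inj_eq val_inj) /=;
    move: (nat_of_ord (enum_rank u)) (nat_of_ord (enum_rank v)) => a b;
    case: ltngtP => H; rewrite ?andbT ?andbF //=; apply/eqP; lia.
congr (_ + _).
rewrite (exchange_big_dep (mem A)) /=; last by move=> u v _ /andP[].
apply: eq_bigr => u uA; apply: eq_big => [v|v _]; last by rewrite /h dist_sym.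
by rewrite uA.
Qed.

Lemma sum_split (F : T -> R) (A : {set T}) :
  \sum_u F u = \sum_(u in A) F u + \sum_(u in ~: A) F u.
Proof.
rewrite (bigID (fun u => u \in A)) /=; congr (_ + _).
by apply: eq_bigl => u; rewrite in_setC.
Qed.

Lemma PgT : Pg [set: T] = \sum_u sg u.
Proof.
have := L1 [set: T]; rewrite setCT.
have -> : Cg [set: T] set0 = 0 by rewrite /Cg big1 // => u _; rewrite big_set0.
rewrite addr0 => <-; apply: eq_bigl => u; by rewrite in_setT.
Qed.

Lemma Pg_diff (A : {set T}) : Pg A - Pg (~: A) = \sum_(u in A) sg u - \sum_(u in ~: A) sg u.
Proof. rewrite L1 L1 setCK (Cg_sym (~: A)); ring. Qed.

Lemma Eg_single u : Eg e g [set: T] - Eg e g (~: [set u]) = sg u.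
Proof.
apply: (@mulIf _ 2%:R); first by rewrite pnatr_eq0.
rewrite mulrBl !mulr_natr -!Pg_Eg.
have h1 := L1 [set u].
have h2 := L1 (~: [set u]).
rewrite setCK (Cg_sym (~: _)) in h2.
have h3 : Pg [set u] = 0.
  rewrite /Pg big_set1 big1 // => v /andP[]; rewrite in_set1 => ->.
  by [].
rewrite PgT (sum_split _ [set u]); rewrite big_set1 in h1 *.
rewrite h2 h1 h3; rewrite mulr2n; ring.
Qed.

End G.

Section G2.
Variables (T : finType) (e : rel T).
Hypothesis esym : symmetric e.
Variable R : realType.

Lemma sg_dv (g : nat -> R) u : sg e g u = \sum_(x <- dist_vector e u) g x.
Proof.
rewrite /dist_vector (perm_big _ (permEl (perm_sort _ _))) /= big_map big_enum /=.
by apply: eq_bigl => w; rewrite in_setC1.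
Qed.

Lemma sum_pred_count (a : pred nat) (s : seq nat) :
  \sum_(x <- s) ((a x)%:R : R) = (count a s)%:R.
Proof. by elim: s => [|x s IH]; rewrite ?big_nil ?big_cons //= IH natrD. Qed.

Lemma sort_eq_count (s1 s2 : seq nat) :
  (forall x, count_mem x s1 = count_mem x s2) -> sort leq s1 = sort leq s2.
Proof.
move=> H; apply/perm_sortP; [exact: leq_total | exact: leq_trans | exact: anti_leq |].
by apply/allP => x _; apply/eqP; exact: H.
Qed.

Lemma DDR_of_sg :
  (forall (g : nat -> R) u v, sg e g u = sg e g v) -> distance_degree_regular e.
Proof.
move=> H u v; rewrite /dist_vector; apply: sort_eq_count => x.
have := H (fun y => ((y == x) : nat)%:R) u v; rewrite !sg_dv.
rewrite /dist_vector !(perm_big _ (permEl (perm_sort _ _))) /= !sum_pred_count.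
by move/eqP; rewrite eqr_nat => /eqP.
Qed.

Lemma sg_of_DDR : distance_degree_regular e -> forall (g : nat -> R) u v, sg e g u = sg e g v.
Proof. by move=> H g u v; rewrite !sg_dv (H u v). Qed.

Lemma ident (g : nat -> R) (A : {set T}) :
  (forall u v, sg e g u = sg e g v) -> #|T| != 0%N ->
  Eg e g A - Eg e g (~: A) = (2%:R * #|A|%:R / #|T|%:R - 1) * Eg e g [set: T].
Proof.
move=> H nT.
have [u0 _] : exists u0 : T, true by move: nT; rewrite -lt0n => /card_gt0P[x]; exists x.
set c := sg e g u0.
have sc : forall B : {set T}, \sum_(u in B) sg e g u = c * #|B|%:R.
  move=> B; rewrite (eq_bigr (fun _ => c)) ?sumr_const ?mulr_natr // => u _.
  exact: H.
have d := Pg_diff esym g A; rewrite !Pg_Eg // !sc !mulr2n in d.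
have t := PgT e g; rewrite Pg_Eg // (eq_bigr (fun _ => c)) ?sumr_const in t;
  last by move=> u _; exact: H.
rewrite mulr2n -[c *+ _]mulr_natr in t.
have hc := cardsC A.
have hn : (#|T|%:R : R) = #|A|%:R + #|~: A|%:R by rewrite -natrD hc.
have nT' : (#|T|%:R : R) != 0 by rewrite pnatr_eq0.
rewrite hn in nT' t *.
move: nT' d t; set x := Eg e g A; set y := Eg e g (~: A); set z := Eg e g [set: T].
set a := (#|A|%:R : R); set b := (#|~: A|%:R : R) => nab d t.
have ex : x - y = (c * a - c * b) / 2%:R by rewrite -d; field.
have ez : z = c * (a + b) / 2%:R by rewrite -t; field.
by rewrite ex ez; field.
Qed.

End G2.

Section G3.
Variables (T : finType) (e : rel T).
Hypothesis esym : symmetric e.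
Variable R : realType.

Lemma card_pert (A : {set T}) u v : u \in A -> v \notin A ->
  #|(A :\ u) :|: [set v]| = #|A|.
Proof.
move=> uA vA; rewrite setUC cardsU1 (cardsD1 u A) uA in_setD1 (negbTE vA) andbF.
by rewrite add1n.
Qed.

Lemma compl_pert (A : {set T}) u v : u \in ~: A -> v \notin ~: A ->
  ~: ((~: A :\ u) :|: [set v]) = (A :\ v) :|: [set u].
Proof.
rewrite !in_setC negbK => uA vA; apply/setP => x; rewrite !inE.
have uv : u != v by apply: contraNneq uA => ->.
have [-> | xu] := eqVneq x u; [ | have [-> | xv] := eqVneq x v];
  rewrite ?eqxx ?xu ?xv ?andbT ?andbF ?orbT ?orbF /= ?uv //.
- by rewrite negbK.
Qed.

Lemma pert_card (A B : {set T}) : is_perturbation e A B -> #|B| = #|A|.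
Proof. by move=> [u [v [uA vA _ ->]]]; rewrite card_pert. Qed.

Lemma pert_compl (A B : {set T}) : is_perturbation e (~: A) B ->
  is_perturbation e A (~: B).
Proof.
move=> [u [v [uA vA euv ->]]]; exists v, u; split.
- by move: vA; rewrite in_setC negbK.
- by move: uA; rewrite in_setC.
- by rewrite esym.
- by rewrite compl_pert.
Qed.

Lemma cc_of_DDR (g : nat -> R) k :
  (forall u v, sg e g u = sg e g v) -> #|T| != 0%N -> compl_closed e k g.
Proof.
move=> H nT.
set F := fun m : nat => (2%:R * m%:R / #|T|%:R - 1) * Eg e g [set: T].
have EC : forall X : {set T}, Eg e g (~: X) = Eg e g X - F #|X|.
  by move=> X; rewrite /F /= -(ident esym X H nT); ring.
have EB : forall X : {set T}, Eg e g X = Eg e g (~: X) - F #|~: X|.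
  by move=> X; rewrite -{1}(setCK X) EC.
have cardC : forall X Y : {set T}, #|X| = #|~: Y| -> #|~: X| = #|Y|.
  move=> X Y h; have := cardsC X; have := cardsC Y; lia.
case: k => A /= HA B.
- move=> hB; rewrite (EB B) (EC A) (cardC _ _ hB).
  have := HA (~: B) (cardC _ _ hB); lra.
- move=> hB; rewrite (EB B) (EC A).
  have hc : #|~: B| = #|A|.
    by move: (pert_compl hB) => /pert_card.
  rewrite hc; have := HA (~: B) (pert_compl hB); lra.
- move=> hB; rewrite (EB B) (EC A) (cardC _ _ hB).
  have := HA (~: B) (cardC _ _ hB); lra.
- move=> hB; rewrite (EB B) (EC A).
  have hc : #|~: B| = #|A|.
    by move: (pert_compl hB) => /pert_card.
  rewrite hc; have := HA (~: B) (pert_compl hB); lra.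
Qed.

End G3.

Section G4.
Variables (T : finType) (e : rel T).
Hypothesis esym : symmetric e.
Hypothesis eirr : irreflexive e.
Hypothesis econn : connected_graph e.
Variable R : realType.

Lemma Eg_le1 (g : nat -> R) (A : {set T}) : (#|A| <= 1)%N -> Eg e g A = 0.
Proof.
move/card_le1_eqP => H; rewrite /Eg big1 // => u uA; rewrite big1 // => v /andP[vA].
by rewrite (H _ _ vA uA) ltnn.
Qed.

Lemma conn_const (f : T -> R) : (forall u w, e u w -> f u = f w) ->
  forall u v, f u = f v.
Proof.
move=> H u v; case/connectP: (econn u v) => p.
elim: p u => [|x p IH] u /=; first by move=> _ ->.
by case/andP => eux px vl; rewrite (H _ _ eux) (IH x px vl).
Qed.

Lemma pert_single u w : e u w -> is_perturbation e (~: [set u]) (~: [set w]).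
Proof.
move=> euw; have wu : w != u by apply: contraTneq euw => ->; rewrite eirr.
exists w, u; split.
- by rewrite !inE.
- by rewrite !inE eqxx.
- by rewrite esym.
apply/setP => x; rewrite !inE.
have [-> | xu] := eqVneq x u; first by rewrite eq_sym (negbTE wu) orbT.
by rewrite orbF andbT.
Qed.

Lemma single_const (g : nat -> R) k : compl_closed e k g ->
  forall u v, Eg e g (~: [set u]) = Eg e g (~: [set v]).
Proof.
have c1 : forall X : {set T}, #|X| = 1%N -> Eg e g X = 0.
  by move=> X hX; apply: Eg_le1; rewrite hX.
have cs : forall u v : T, #|~: [set v]| = #|~: [set u]|.
  by move=> u v; rewrite !cardsC1.
case: k => /= cc.
- move=> u v; apply/eqP; rewrite eq_le; apply/andP; split.
    apply: (cc [set u]) => [B hB|]; [by rewrite (c1 [set u]) ?cards1 // (c1 B) // hB cards1 | exact: cs].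
  apply: (cc [set v]) => [B hB|]; [by rewrite (c1 [set v]) ?cards1 // (c1 B) // hB cards1 | exact: cs].
- have sm : forall u, is_local_minimizer e (Eg e g) (~: [set u]).
    move=> u; apply: cc => B hB; rewrite c1 ?cards1 // c1 //.
    by rewrite (pert_card hB) cards1.
  apply: conn_const => u w euw; apply/eqP; rewrite eq_le; apply/andP; split.
    exact: (sm u _ (pert_single euw)).
  by apply: (sm w _ (pert_single _)); rewrite esym.
- move=> u v; apply/eqP; rewrite eq_le; apply/andP; split.
    apply: (cc [set v]) => [B hB|]; [by rewrite (c1 [set v]) ?cards1 // (c1 B) // hB cards1 | exact: cs].
  apply: (cc [set u]) => [B hB|]; [by rewrite (c1 [set u]) ?cards1 // (c1 B) // hB cards1 | exact: cs].
- have sm : forall u, is_local_maximizer e (Eg e g) (~: [set u]).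
    move=> u; apply: cc => B hB; rewrite (c1 [set u]) ?cards1 // (c1 B) //.
    by rewrite (pert_card hB) cards1.
  apply: conn_const => u w euw; apply/eqP; rewrite eq_le; apply/andP; split.
    by apply: (sm w _ (pert_single _)); rewrite esym.
  exact: (sm u _ (pert_single euw)).
Qed.

Lemma sum_count (g : nat -> R) (D : nat) (s : seq nat) :
  all (fun x => (1 <= x <= D)%N) s ->
  \sum_(x <- s) g x = \sum_(1 <= i < D.+1) (count_mem i s)%:R * g i.
Proof.
elim: s => [|x s IH] /=.
  by rewrite big_nil big1 // => i _; rewrite mul0r.
case/andP => hx hs; rewrite big_cons IH //.
rewrite [RHS](eq_bigr (fun i => ((x == i) : nat)%:R * g i + (count_mem i s)%:R * g i));
  last by move=> i _; rewrite natrD mulrDl.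
rewrite big_split /=; congr (_ + _).
rewrite (bigD1_seq x) ?iota_uniq //=; last by rewrite mem_index_iota; lia.
rewrite eqxx mul1r big1 ?addr0 // => i ix.
by rewrite eq_sym (negbTE ix) mul0r.
Qed.

End G4.
Fixpoint pr (n : nat) : nat :=
  if n is n'.+1 then s2val (prime_above (pr n')) else 2%N.

Lemma pr_prime n : prime (pr n).
Proof. by case: n => //= n; case: (prime_above _). Qed.

Lemma pr_lt n : (pr n < pr n.+1)%N.
Proof. by rewrite /=; case: (prime_above _). Qed.

Lemma pr_mono m n : (m < n)%N -> (pr m < pr n)%N.
Proof.
elim: n => // n IH; rewrite ltnS leq_eqVlt => /orP[/eqP -> | /IH h].
  exact: pr_lt.
exact: ltn_trans h (pr_lt n).
Qed.

Lemma pr_inj : injective pr.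
Proof.
move=> m n h; apply/eqP; case: (ltngtP m n) => // H.
  by have := pr_mono H; rewrite h ltnn.
by have := pr_mono H; rewrite h ltnn.
Qed.

Lemma pr_gt0 n : (0 < pr n)%N.
Proof. exact: prime_gt0 (pr_prime n). Qed.

Section L.
Variable R : realType.

Lemma prod_gt0 (c : nat -> nat) (r : seq nat) : (0 < \prod_(i <- r) pr i ^ c i)%N.
Proof.
elim: r => [|j r IH]; first by rewrite big_nil.
by rewrite big_cons muln_gt0 expn_gt0 pr_gt0 IH.
Qed.

Lemma ln_prod (c : nat -> nat) (r : seq nat) :
  ln ((\prod_(i <- r) pr i ^ c i)%N%:R : R) = \sum_(i <- r) (c i)%:R * ln (pr i)%:R.
Proof.
elim: r => [|i r IH]; first by rewrite !big_nil ln1.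
rewrite !big_cons natrM lnM ?IH ?natrX ?lnXn ?mulr_natl //.
all: rewrite ?posrE ?ltr0n ?pr_gt0 ?prod_gt0 //; apply: exprn_gt0; by rewrite ltr0n pr_gt0.
Qed.

Lemma logn_prod_pr (c : nat -> nat) (r : seq nat) j :
  logn (pr j) (\prod_(i <- r) pr i ^ c i) = \sum_(i <- r) c i * (j == i).
Proof.
elim: r => [|i r IH]; first by rewrite !big_nil logn1.
rewrite !big_cons lognM ?expn_gt0 ?pr_gt0 ?prod_gt0 // IH lognX logn_prime ?pr_prime //.
by rewrite (inj_eq pr_inj).
Qed.

Lemma sum_delta (c : nat -> nat) D j : (1 <= j <= D)%N ->
  (\sum_(1 <= i < D.+1) c i * (j == i))%N = c j.
Proof.
move=> hj; rewrite (bigD1_seq j) ?iota_uniq //=; last by rewrite mem_index_iota; lia.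
rewrite eqxx muln1 big1 ?addn0 // => i ij.
by rewrite eq_sym (negbTE ij) muln0.
Qed.

Lemma indep_int (D : nat) (z : nat -> int) :
  \sum_(1 <= i < D.+1) (z i)%:~R * (ln (pr i)%:R : R) = 0 ->
  forall i, (1 <= i <= D)%N -> z i = 0.
Proof.
move=> H.
pose a i := match z i with Posz n => n | Negz _ => 0%N end.
pose b i := match z i with Posz _ => 0%N | Negz n => n.+1 end.
have zab : forall i, (z i)%:~R = (a i)%:R - (b i)%:R :> R.
  move=> i; rewrite /a /b; case: (z i) => n; first by rewrite subr0.
  by rewrite NegzE mulrNz sub0r.
have E : ln ((\prod_(1 <= i < D.+1) pr i ^ a i)%N%:R : R) =
         ln ((\prod_(1 <= i < D.+1) pr i ^ b i)%N%:R : R).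
  rewrite !ln_prod; apply/eqP; rewrite -subr_eq0 -sumrB; apply/eqP; rewrite -[RHS]H.
  by apply: eq_bigr => i _; rewrite zab mulrBl.
move/ln_inj: E; rewrite !posrE !ltr0n !prod_gt0 => /(_ isT isT) /eqP.
rewrite eqr_nat => /eqP E i hi.
have := congr1 (logn (pr i)) E; rewrite !logn_prod_pr !sum_delta // /a /b.
by case: (z i) => n //= ->.
Qed.

Lemma indep_rat (D : nat) : Q_lin_indep (fun i => ln (pr i)%:R : R) D.
Proof.
move=> q H.
pose N := (\prod_(1 <= j < D.+1) denq (q j))%R.
pose M i := (\prod_(j <- index_iota 1 D.+1 | j != i) denq (q j))%R.
pose z i := (numq (q i) * M i)%R.
have NM : forall i, (1 <= i <= D)%N -> N = (denq (q i) * M i)%R.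
  by move=> i hi; rewrite /N (bigD1_seq i) ?iota_uniq //= mem_index_iota; lia.
have Mn0 : forall i, M i != 0.
  move=> i; rewrite /M; elim: (index_iota _ _) => [|j r IH]; first by rewrite big_nil.
  by rewrite big_cons; case: (j != i) => //; rewrite mulf_neq0 ?denq_neq0.
have Nn0 : N != 0.
  rewrite /N; elim: (index_iota _ _) => [|j r IH]; first by rewrite big_nil.
  by rewrite big_cons mulf_neq0 ?denq_neq0.
have Hz : \sum_(1 <= i < D.+1) (z i)%:~R * (ln (pr i)%:R : R) = 0.
  have -> : \sum_(1 <= i < D.+1) (z i)%:~R * (ln (pr i)%:R : R) =
    (\sum_(1 <= i < D.+1) ratr (q i) * ln (pr i)%:R) * N%:~R.
    rewrite mulr_suml big_nat [RHS]big_nat; apply: eq_bigr => i hi.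
    rewrite mulrAC; congr (_ * _).
    rewrite (NM i); last by move: hi; lia.
    rewrite /z !intrM mulrA; congr (_ * _).
    rewrite -(ratr_int R (numq (q i))) numqE rmorphM. congr (_ * _); exact: ratr_int.
  by rewrite H mul0r.
move=> i hi; have := indep_int Hz hi; rewrite /z => /eqP.
by rewrite mulf_eq0 (negbTE (Mn0 i)) orbF numq_eq0 => /eqP.
Qed.

End L.

Lemma DDR_of_cc (T : finType) (e : rel T) (R : realType) (g : nat -> R) k :
  symmetric e -> irreflexive e -> connected_graph e ->
  Q_lin_indep g (diameter e) -> compl_closed e k g -> distance_degree_regular e.
Proof.
move=> esym eirr conn Hq Hc.
have Hsg : forall u v, sg e g u = sg e g v.
  move=> u v; rewrite -!(Eg_single esym).
  by rewrite (single_const esym eirr conn Hc u v).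
move=> u v; rewrite /dist_vector; apply: sort_eq_count => x.
set D := diameter e.
have rng : forall u0, all (fun x => (1 <= x <= D)%N) [seq dist e u0 w | w in [set~ u0]].
  move=> u0; apply/allP => y /mapP [w]; rewrite mem_enum in_setC1 => wu ->.
  by rewrite dist_gt0 1?eq_sym // dist_leD.
have Hs := Hsg u v; rewrite !sg_dv /dist_vector !(perm_big _ (permEl (perm_sort _ _))) /= in Hs.
rewrite (sum_count g (rng u)) (sum_count g (rng v)) in Hs.
set su := [seq dist e u w | w in [set~ u]] in Hs *.
set sv := [seq dist e v w | w in [set~ v]] in Hs *.
have Q := Hq (fun i => (count_mem i su)%:Q - (count_mem i sv)%:Q).
have [hx|hx] := boolP (1 <= x <= D)%N.
  apply/eqP; rewrite -(eqr_nat rat) -subr_eq0; apply/eqP; apply: Q => //.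
  rewrite -[RHS](subrr (\sum_(1 <= i < D.+1) (count_mem i sv)%:R * g i)).
  rewrite -[X in _ = X - _]Hs -sumrB; apply: eq_bigr => i _.
  by rewrite rmorphB /= !ratr_nat mulrBl.
have nu : x \notin su by apply: contra hx => xs; exact: (allP (rng u) x xs).
have nv : x \notin sv by apply: contra hx => xs; exact: (allP (rng v) x xs).
by rewrite (count_memPn nu) (count_memPn nv).
Qed.

Local Close Scope ring_scope.
Unset Implicit Arguments.

Theorem mainTheorem9 (T : finType) (e : rel T) (R : realType) :
  simple_graph e -> connected_graph e -> (2 <= #|T|)%N ->
  let D := diameter e in
  (distance_degree_regular e <->
     (forall (g : nat -> R) (A : {set T}), (0 < #|A|)%N ->
        (Eg e g A - Eg e g (~: A) =
         (2%:R * #|A|%:R / #|T|%:R - 1) * Eg e g [set: T])%R)) /\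
  (forall k : opt_kind,
     (distance_degree_regular e <-> (forall g : nat -> R, compl_closed e k g)) /\
     (distance_degree_regular e <->
        (exists g : nat -> R, Q_lin_indep g D /\ compl_closed e k g))).
Proof.
move=> [esym eirr] conn n2 D.
have nT : #|T| != 0%N by rewrite -lt0n; apply: leq_trans n2.
split.
  split.
    by move=> H g A _; apply: (ident esym A (sg_of_DDR H g) nT).
  move=> H; apply: (DDR_of_sg (R := R)) => g u v.
  rewrite -!(Eg_single esym); congr (_ - _)%R.
  have hu := H g [set u]; have hv := H g [set v].
  rewrite !cards1 in hu hv; have {hu}hu := hu isT; have {hv}hv := hv isT.
  rewrite (Eg_le1 e g (A := [set u])) ?cards1 // in hu.
  rewrite (Eg_le1 e g (A := [set v])) ?cards1 // in hv.
  apply: GRing.oppr_inj; by rewrite -GRing.sub0r hu -hv GRing.sub0r.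
move=> k.
have H1 : distance_degree_regular e -> forall g : nat -> R, compl_closed e k g.
  by move=> H g; apply: (cc_of_DDR esym (sg_of_DDR H g) nT).
pose gL := fun i => ln (pr i)%:R : R.
split; split.
- exact: H1.
- by move=> Hc; apply: (DDR_of_cc esym eirr conn (@indep_rat R D) (Hc gL)).
- by move=> H; exists gL; split; [exact: indep_rat | exact: H1].
- by case=> g [Hq Hc]; apply: (DDR_of_cc esym eirr conn Hq Hc).
Qed.
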